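(* Let $(\Sigma_+,\Sigma_-,N_1,N_2,N_3)$ be a solution of the Wainwright–Hsu system satisfying the constraint, with $N_1=0$, $N_2>0$, $N_3<0$, and define for $i=1,2,3$ $$a_i(\tau)=\exp\Big(-\int_0^\tau(3\Sigma_i(s)+1)\,ds\Big),$$ where $\Sigma_1=-\frac23\Sigma_+$, $\Sigma_2=\frac13\Sigma_++\frac1{\sqrt3}\Sigma_-$, $\Sigma_3=\frac13\Sigma_+-\frac1{\sqrt3}\Sigma_-$. Then $a_i(\tau)\to0$ as $\tau\to\infty$ for $i=1,2,3$.
   Context: Wainwright–Hsu system: for functions $N_1,N_2,N_3,\Sigma_+,\Sigma_-$ of $\tau\in\mathbb{R}$ (prime denotes $d/d\tau$), $N_1'=(q-4\Sigma_+)N_1$, $N_2'=(q+2\Sigma_++2\sqrt3\Sigma_-)N_2$, $N_3'=(q+2\Sigma_+-2\sqrt3\Sigma_-)N_3$, $\Sigma_+'=-(2-q)\Sigma_+-3S_+$, $\Sigma_-'=-(2-q)\Sigma_--3S_-$, where $q=2(\Sigma_+^2+\Sigma_-^2)$, $S_+=\frac12[(N_2-N_3)^2-N_1(2N_1-N_2-N_3)]$, $S_-=\frac{\sqrt3}{2}(N_3-N_2)(N_1-N_2-N_3)$, together with the constraint $\Sigma_+^2+\Sigma_-^2+\frac34[N_1^2+N_2^2+N_3^2-2(N_1N_2+N_2N_3+N_1N_3)]=1$. (Geometrically, the spacetime metric is $-dt^2+\sum_i a_i^{-2}\xi^i\otimes\xi^i$ with $\xi^i$ a left-invariant coframe and $dt/d\tau=3/\theta$.)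 *)

(* Defs.v *)
From Stdlib Require Import Reals.
From Coquelicot Require Import Coquelicot.
Open Scope R_scope.

Definition WH_q (Sp Sm : R) : R := 2 * (Sp ^ 2 + Sm ^ 2).

Definition WH_Splus (N1 N2 N3 : R) : R :=
  / 2 * ((N2 - N3) ^ 2 - N1 * (2 * N1 - N2 - N3)).

Definition WH_Sminus (N1 N2 N3 : R) : R :=
  sqrt 3 / 2 * (N3 - N2) * (N1 - N2 - N3).

Definition WH_solution (N1 N2 N3 Sp Sm : R -> R) : Prop :=
  forall t : R,
    let q := WH_q (Sp t) (Sm t) in
    is_derive N1 t ((q - 4 * Sp t) * N1 t) /\
    is_derive N2 t ((q + 2 * Sp t + 2 * sqrt 3 * Sm t) * N2 t) /\
    is_derive N3 t ((q + 2 * Sp t - 2 * sqrt 3 * Sm t) * N3 t) /\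
    is_derive Sp t (- (2 - q) * Sp t - 3 * WH_Splus (N1 t) (N2 t) (N3 t)) /\
    is_derive Sm t (- (2 - q) * Sm t - 3 * WH_Sminus (N1 t) (N2 t) (N3 t)) /\
    Sp t ^ 2 + Sm t ^ 2
      + 3 / 4 * (N1 t ^ 2 + N2 t ^ 2 + N3 t ^ 2
                 - 2 * (N1 t * N2 t + N2 t * N3 t + N1 t * N3 t)) = 1.

Definition WH_Sigma (i : nat) (Sp Sm : R) : R :=
  match i with
  | 1%nat => - (2 / 3) * Sp
  | 2%nat => / 3 * Sp + / sqrt 3 * Sm
  | _ => / 3 * Sp - / sqrt 3 * Sm
  end.

Definition WH_a (i : nat) (Sp Sm : R -> R) (tau : R) : R :=
  exp (- RInt (fun s => 3 * WH_Sigma i (Sp s) (Sm s) + 1) 0 tau).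

(* Main.v *)
Require Import Defs.
From Stdlib Require Import Reals Lra.
From Coquelicot Require Import Coquelicot.
From Stdlib Require Import Lia.
Open Scope R_scope.
Lemma dplus (f g : R -> R) (t a b : R) : is_derive f t a -> is_derive g t b -> is_derive (fun s => f s + g s) t (a + b).
Proof. intros; apply (is_derive_plus f g t a b); auto. Qed.
Lemma dminus (f g : R -> R) (t a b : R) : is_derive f t a -> is_derive g t b -> is_derive (fun s => f s - g s) t (a - b).
Proof. intros; apply (is_derive_minus f g t a b); auto. Qed.
Lemma dscal (c : R) (f : R -> R) (t a : R) : is_derive f t a -> is_derive (fun s => c * f s) t (c * a).
Proof. intros; apply (is_derive_scal f t c a); auto. Qed.
Lemma did t : is_derive (fun s => s) t 1.
Proof. apply (@is_derive_id R_AbsRing). Qed.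
Lemma dln (f : R -> R) (t d : R) : 0 < f t -> is_derive f t d -> is_derive (fun s => ln (f s)) t (d / f t).
Proof. intros. apply (is_derive_comp ln f t (/ f t) d); auto. apply is_derive_ln; auto. Qed.
Lemma dexp (f : R -> R) (t d : R) : is_derive f t d -> is_derive (fun s => exp (f s)) t (d * exp (f t)).
Proof. intros. apply (is_derive_comp exp f t (exp (f t)) d); auto. apply is_derive_exp. Qed.
Lemma deq (f : R -> R) (t d d' : R) : is_derive f t d -> d = d' -> is_derive f t d'.
Proof. intros; subst; auto. Qed.
Lemma mono (g dg : R -> R) (a b : R) : (forall t : R, is_derive g t (dg t)) -> (forall t, a <= t <= b -> 0 <= dg t) -> a <= b -> g a <= g b.
Proof.
  intros Hd Hp Hab.
  destruct (MVT_gen g a b dg) as [c [Hc E]].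
  - intros; auto.
  - intros y _. apply continuity_pt_filterlim. apply (ex_derive_continuous g y). eexists; apply Hd.
  - rewrite Rmin_left in Hc by lra. rewrite Rmax_right in Hc by lra.
    assert (0 <= dg c) by (apply Hp; lra). nra.
Qed.
Lemma lim_exp (F : R -> R) : (forall M, exists T, forall t, T < t -> M <= F t) ->
  is_lim (fun t => exp (- F t)) p_infty 0.
Proof.
  intros H. apply is_lim_spec. intros eps. simpl.
  destruct (H (- ln eps + 1)) as [T HT]. exists T. intros t Ht.
  specialize (HT t Ht). rewrite Rminus_0_r. rewrite Rabs_pos_eq by (left; apply exp_pos).
  apply Rle_lt_trans with (exp (ln eps - 1)).
  - destruct (Req_dec (- F t) (ln eps - 1)) as [E|E]. rewrite E; lra. left. apply exp_increasing. lra.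
  - rewrite <- (exp_ln eps) at 2 by apply cond_pos. apply exp_increasing. lra.
Qed.
Lemma dopp (f : R -> R) (t a : R) : is_derive f t a -> is_derive (fun s => - f s) t (- a).
Proof. intros; apply (is_derive_opp f t a); auto. Qed.
Lemma dconst (c t : R) : is_derive (fun _ => c) t 0.
Proof. apply (@is_derive_const R_AbsRing R_NormedModule c t). Qed.
Lemma expl a b : a <= b -> exp a <= exp b.
Proof. intros [H|H]. left; apply exp_increasing; auto. subst; lra. Qed.
Lemma ln_grow A k C : 0 < A -> 0 < k -> forall M, exists T, forall t, T < t -> 0 <= t /\ M <= /4 * ln (A + k*t) + C.
Proof.
  intros HA Hk M. exists (Rmax 0 (exp (4*(M - C)) / k)). intros t Ht.
  pose proof (Rmax_l 0 (exp (4*(M - C)) / k)). pose proof (Rmax_r 0 (exp (4*(M - C)) / k)).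
  split. lra.
  assert (exp (4*(M-C)) < A + k*t).
  { assert (exp (4 * (M - C)) / k < t) by lra.
    apply Rmult_lt_compat_l with (r := k) in H1; auto.
    replace (k * (exp (4 * (M - C)) / k)) with (exp (4 * (M - C))) in H1 by (field; lra). lra. }
  apply ln_increasing in H1; [| apply exp_pos]. rewrite ln_exp in H1. lra.
Qed.

Theorem mainTheorem18 (N1 N2 N3 Sp Sm : R -> R) :
  WH_solution N1 N2 N3 Sp Sm ->
  (forall t, N1 t = 0) ->
  (forall t, 0 < N2 t) ->
  (forall t, N3 t < 0) ->
  forall i : nat, (1 <= i <= 3)%nat ->
    is_lim (WH_a i Sp Sm) p_infty 0.
Proof.
  intros HS H1 H2 H3 i Hi.
  assert (Hc : forall t, Sp t ^2 + Sm t ^2 + 3/4 * (N2 t - N3 t)^2 = 1).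
  { intro t; destruct (HS t) as (_&_&_&_&_&E). rewrite H1 in E. rewrite <- E; ring. }
  assert (Hx : forall t, 0 < 1 + Sp t).
  { intro t. pose proof (Hc t). pose proof (H2 t). pose proof (H3 t).
    assert (0 < (N2 t - N3 t)^2) by nra. nra. }
  assert (HD : forall t, 3/4*(N2 t - N3 t)^2 <= 2*(1+Sp t)).
  { intro t. pose proof (Hc t). pose proof (Hx t). nra. }
  assert (HD2 : forall t, (N2 t - N3 t)^2 <= 4/3).
  { intro t. pose proof (Hc t). nra. }
  assert (Hs3 : sqrt 3 * sqrt 3 = 3) by (apply sqrt_sqrt; lra).
  assert (Hs3p : 0 < sqrt 3) by (apply sqrt_lt_R0; lra).
  assert (Hinv : / sqrt 3 = sqrt 3 / 3).
  { apply (Rmult_eq_reg_l (sqrt 3)); [|lra]. rewrite Rinv_r by lra. unfold Rdiv.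
    rewrite <- Rmult_assoc, Hs3. field. }
  assert (HSm : forall t, Sm t ^ 2 = 1 - Sp t ^ 2 - 3/4 * (N2 t - N3 t)^2).
  { intro t; pose proof (Hc t); lra. }
  assert (dSp : forall t : R, is_derive Sp t (-(3/2)*(N2 t - N3 t)^2 * (1 + Sp t))).
  { intro t; destruct (HS t) as (_&_&_&E&_). eapply deq; [apply E|].
    unfold WH_q, WH_Splus. rewrite H1, HSm. field. }
  assert (dlnx : forall t : R, is_derive (fun s => ln (1 + Sp s)) t (-(3/2)*(N2 t - N3 t)^2)).
  { intro t. eapply deq; [apply dln; [apply Hx| apply dplus; [apply dconst| apply dSp]]|].
    pose proof (Hx t). cbv beta. field. lra. }
  assert (dlnN2 : forall t : R, is_derive (fun s => ln (N2 s)) t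
     (WH_q (Sp t) (Sm t) + 2 * Sp t + 2 * sqrt 3 * Sm t)).
  { intro t; destruct (HS t) as (_&E&_). eapply deq; [apply dln; [apply H2| apply E]|].
    pose proof (H2 t). field. lra. }
  assert (dlnn3 : forall t : R, is_derive (fun s => ln (- N3 s)) t
     (WH_q (Sp t) (Sm t) + 2 * Sp t - 2 * sqrt 3 * Sm t)).
  { intro t; destruct (HS t) as (_&_&E&_).
    eapply deq; [apply dln; [pose proof (H3 t); lra| apply dopp, E]|].
    pose proof (H3 t). cbv beta. field. lra. }
  pose (W := fun s => ln (N2 s) + ln (- N3 s) - 2 * ln (1 + Sp s)).
  assert (dW : forall t : R, is_derive W t (4 * (1 + Sp t))).
  { intro t. eapply deq; [apply dminus; [apply dplus; [apply dlnN2|apply dlnn3]| apply dscal, dlnx]|].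
    unfold WH_q. rewrite HSm. field. }
  pose (V := fun s => ln (1 + Sp s) + W s).
  assert (dV : forall t : R, is_derive V t (-(3/2)*(N2 t - N3 t)^2 + 4 * (1 + Sp t))).
  { intro t. apply dplus; auto. }
  assert (Vmono : forall t, 0 <= t -> V 0 <= V t).
  { intros t Ht. apply (mono V _ 0 t dV); auto. intros s _. pose proof (HD s). lra. }
  assert (HexpV : forall t, exp (V t) = (1 + Sp t) * exp (W t)).
  { intro t. unfold V. rewrite exp_plus, exp_ln; auto. }
  assert (Wgrow : forall t, 0 <= t -> exp (W 0) + 4 * exp (V 0) * t <= exp (W t)).
  { intros t Ht.
    assert (Hm := mono (fun s => exp (W s) - 4 * exp (V 0) * s)
      (fun s => 4 * (1 + Sp s) * exp (W s) - 4 * exp (V 0) * 1) 0 t).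
    simpl in Hm. cut (exp (W 0) - 4 * exp (V 0) * 0 <= exp (W t) - 4 * exp (V 0) * t). lra.
    apply Hm; auto.
    - intro s. apply dminus. eapply deq; [apply dexp, dW| ring]. apply dscal, did.
    - intros s [Hs _]. pose proof (expl _ _ (Vmono s Hs)). rewrite (HexpV s) in H. lra. }
  assert (lnxlow : forall t, 0 <= t -> ln (1 + Sp 0) - 2 * t <= ln (1 + Sp t)).
  { intros t Ht. assert (Hm := mono (fun s => ln (1 + Sp s) + 2 * s)
      (fun s => -(3/2)*(N2 s - N3 s)^2 + 2 * 1) 0 t).
    simpl in Hm. cut (ln (1 + Sp 0) + 2 * 0 <= ln (1 + Sp t) + 2 * t). lra.
    apply Hm; auto.
    - intro s. apply dplus; auto. apply dscal, did.
    - intros s _. pose proof (HD2 s). lra. }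
  assert (Wup : forall t, W t <= ln (2/3) - ln (1 + Sp t)).
  { intro t. unfold W. pose proof (H2 t). pose proof (H3 t). pose proof (Hx t). pose proof (HD t).
    rewrite <- ln_mult by lra.
    assert (Hl : ln (N2 t * - N3 t) <= ln (2/3 * (1 + Sp t))).
    { pose proof (pow2_ge_0 (N2 t + N3 t)). apply ln_le; nra. }
    rewrite (ln_mult (2/3)) in Hl by lra. lra. }
  assert (L2 : forall t, W t + V t - ln (8/3) <= 2*(ln (N2 t) - ln (1+Sp t))).
  { intro t. unfold V, W. pose proof (H2 t). pose proof (H3 t). pose proof (Hx t). pose proof (HD t).
    assert (Hl : ln (- N3 t * - N3 t) <= ln (8/3 * (1 + Sp t))).
    { apply ln_le. nra. nra. }
    rewrite !ln_mult in Hl by lra. lra. }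
  assert (L3 : forall t, W t + V t - ln (8/3) <= 2*(ln (- N3 t) - ln (1+Sp t))).
  { intro t. unfold V, W. pose proof (H2 t). pose proof (H3 t). pose proof (Hx t). pose proof (HD t).
    assert (Hl : ln (N2 t * N2 t) <= ln (8/3 * (1 + Sp t))).
    { apply ln_le. nra. nra. }
    rewrite !ln_mult in Hl by lra. lra. }
  assert (Wlow : forall t, 0 <= t -> ln (exp (W 0) + 4 * exp (V 0) * t) <= W t).
  { intros t Ht. rewrite <- (ln_exp (W t)). apply ln_le; auto.
    pose proof (exp_pos (W 0)). pose proof (exp_pos (V 0)). nra. }
  assert (HA : 0 < exp (W 0)) by apply exp_pos.
  assert (Hk : 0 < 4 * exp (V 0)) by (pose proof (exp_pos (V 0)); lra).
  destruct i as [|[|[|[|i]]]]; try (exfalso; lia); unfold WH_a; apply lim_exp.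
  -
    assert (HR : forall tau, RInt (fun s => 3 * WH_Sigma 1 (Sp s) (Sm s) + 1) 0 tau
       = (3*tau - /2 * W tau) - (3*0 - /2*W 0)).
    { intro tau. apply is_RInt_unique. apply (is_RInt_derive (fun s => 3*s - /2 * W s)).
      - intros s _. unfold WH_Sigma; cbv beta iota.
        eapply deq; [apply dminus; [apply dscal, did | apply dscal, dW] |]. field.
      - intros s _. unfold WH_Sigma; cbv beta iota. apply (ex_derive_continuous (K:=R_AbsRing) (V:=R_NormedModule)). eexists.
        apply dplus; [apply dscal, dscal, dSp | apply dconst]. }
    intro M. exists (Rmax 0 (M + /2 * ln (2/3) - /2 * ln (1 + Sp 0) - /2 * W 0)).
    intros t Ht. rewrite HR.
    pose proof (Rmax_l 0 (M + /2 * ln (2/3) - /2 * ln (1 + Sp 0) - /2 * W 0)).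
    pose proof (Rmax_r 0 (M + /2 * ln (2/3) - /2 * ln (1 + Sp 0) - /2 * W 0)).
    pose proof (Wup t). pose proof (lnxlow t). lra.
  -
    assert (HR : forall tau, RInt (fun s => 3 * WH_Sigma 2 (Sp s) (Sm s) + 1) 0 tau
       = /2 * (ln (N2 tau) - ln (1 + Sp tau)) - /2 * (ln (N2 0) - ln (1 + Sp 0))).
    { intro tau. apply is_RInt_unique. apply (is_RInt_derive (fun s => /2 * (ln (N2 s) - ln (1 + Sp s)))).
      - intros s _. unfold WH_Sigma; cbv beta iota.
        eapply deq; [apply dscal, dminus; [apply dlnN2 | apply dlnx] |].
        unfold WH_q. rewrite HSm, Hinv. field.
      - intros s _. unfold WH_Sigma; cbv beta iota. apply (ex_derive_continuous (K:=R_AbsRing) (V:=R_NormedModule)). eexists.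
        apply dplus; [apply dscal, dplus; apply dscal; [apply dSp| destruct (HS s) as (_&_&_&_&E&_); apply E] | apply dconst]. }
    intro M. destruct (ln_grow _ _ (/4 * V 0 - /4 * ln (8/3) - /2 * (ln (N2 0) - ln (1 + Sp 0))) HA Hk M) as [T HT].
    exists T. intros t Ht. destruct (HT t Ht) as [Ht0 HM]. rewrite HR.
    pose proof (L2 t). pose proof (Wlow t Ht0). pose proof (Vmono t Ht0). lra.
  -
    assert (HR : forall tau, RInt (fun s => 3 * WH_Sigma 3 (Sp s) (Sm s) + 1) 0 tau
       = /2 * (ln (- N3 tau) - ln (1 + Sp tau)) - /2 * (ln (- N3 0) - ln (1 + Sp 0))).
    { intro tau. apply is_RInt_unique. apply (is_RInt_derive (fun s => /2 * (ln (- N3 s) - ln (1 + Sp s)))).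
      - intros s _. unfold WH_Sigma; cbv beta iota.
        eapply deq; [apply dscal, dminus; [apply dlnn3 | apply dlnx] |].
        unfold WH_q. rewrite HSm, Hinv. field.
      - intros s _. unfold WH_Sigma; cbv beta iota. apply (ex_derive_continuous (K:=R_AbsRing) (V:=R_NormedModule)). eexists.
        apply dplus; [apply dscal, dminus; apply dscal; [apply dSp| destruct (HS s) as (_&_&_&_&E&_); apply E] | apply dconst]. }
    intro M. destruct (ln_grow _ _ (/4 * V 0 - /4 * ln (8/3) - /2 * (ln (- N3 0) - ln (1 + Sp 0))) HA Hk M) as [T HT].
    exists T. intros t Ht. destruct (HT t Ht) as [Ht0 HM]. rewrite HR.
    pose proof (L3 t). pose proof (Wlow t Ht0). pose proof (Vmono t Ht0). lra.
Qed.
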